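(* Assume the standing setting. Then every vertex of $G$ is incident with at most one nonremovable edge of type I and with at most two nonremovable edges of type II.
   Context: Graphs may have multiple edges but no loops. An edge is admissible if it lies in some perfect matching; a connected graph with at least two vertices is matching covered if every edge is admissible; an edge $e$ of a matching covered graph $G$ is removable if $G-e$ is matching covered, and nonremovable otherwise. A brick is a 3-connected nonbipartite graph $G$ such that $G-x-y$ has a perfect matching for all distinct $x,y$. A nonbipartite matching covered graph $G$ is near-bipartite if it has a pair of edges $\{e_1,e_2\}$ (a removable doubleton) such that $G-\{e_1,e_2\}$ is bipartite matching covered. Standing setting: $G$ is a near-bipartite brick with removable doubleton $\{e_1,e_2\}$, $H=G-\{e_1,e_2\}$, and $(U,W)$ is the bipartition of $H$, labelled so that both ends of $e_1$ lie in $U$ and both ends of $e_2$ lie in $W$. A nonremovable edge $e\notin\{e_1,e_2\}$ of $G$ is of type I if $e$ is removable in $H$, and of type II if $e$ is nonremovable in $H$. *)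

(* Defs.v *)
From mathcomp Require Import all_boot.
Set Implicit Arguments. Unset Strict Implicit. Unset Printing Implicit Defensive.

(* A multigraph without loops is given by a finite vertex type V, a finite
   edge type E and two endpoint maps u v : E -> V (loopless: u e != v e).
   A (sub)graph is a pair (S, F) with S : {set V} the vertex set and
   F : {set E} the edge set; we always use it with every edge of F having
   both ends in S. Parallel edges are allowed (distinct e with equal ends). *)

Section Graphs.
Variables (V E : finType) (u v : E -> V).

Definition incident (e : E) (x : V) : bool := (u e == x) || (v e == x).

Definition adj (F : {set E}) : rel V :=
  fun x y => [exists e in F, ((u e == x) && (v e == y)) || ((v e == x) && (u e == y))].

(* edges of F with no end in X (used for G - X) *)
Definition edges_avoiding (F : {set E}) (X : {set V}) : {set E} :=
  [set e in F | (u e \notin X) && (v e \notin X)].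

Definition connected_graph (S : {set V}) (F : {set E}) : Prop :=
  forall x y, x \in S -> y \in S -> connect (adj F) x y.

Definition perfect_matching (S : {set V}) (F : {set E}) (M : {set E}) : Prop :=
  M \subset F /\ forall x, x \in S -> #|[set e in M | incident e x]| = 1.

Definition admissible (S : {set V}) (F : {set E}) (e : E) : Prop :=
  exists M, perfect_matching S F M /\ e \in M.

Definition matching_covered (S : {set V}) (F : {set E}) : Prop :=
  connected_graph S F /\ 2 <= #|S| /\ forall e, e \in F -> admissible S F e.

Definition removable (S : {set V}) (F : {set E}) (e : E) : Prop :=
  e \in F /\ matching_covered S (F :\ e).

Definition nonremovable (S : {set V}) (F : {set E}) (e : E) : Prop :=
  e \in F /\ ~ removable S F e.

Definition bipartite (S : {set V}) (F : {set E}) : Prop :=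
  exists A : {set V}, forall e, e \in F -> (u e \in A) != (v e \in A).

Definition k_connected (k : nat) (S : {set V}) (F : {set E}) : Prop :=
  k < #|S| /\ forall X : {set V}, X \subset S -> #|X| < k ->
    connected_graph (S :\: X) (edges_avoiding F X).

Definition brick (S : {set V}) (F : {set E}) : Prop :=
  [/\ k_connected 3 S F, ~ bipartite S F &
      forall x y, x \in S -> y \in S -> x != y ->
        exists M, perfect_matching (S :\ x :\ y) (edges_avoiding F [set x; y]) M].

Definition removable_doubleton (S : {set V}) (F : {set E}) (e1 e2 : E) : Prop :=
  [/\ e1 \in F, e2 \in F, e1 != e2,
      bipartite S (F :\ e1 :\ e2) & matching_covered S (F :\ e1 :\ e2)].

Definition near_bipartite (S : {set V}) (F : {set E}) : Prop :=
  [/\ matching_covered S F, ~ bipartite S F &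
      exists e1 e2, removable_doubleton S F e1 e2].

Definition typeI (S : {set V}) (F : {set E}) (e1 e2 e : E) : Prop :=
  [/\ e \notin [set e1; e2], nonremovable S F e & removable S (F :\ e1 :\ e2) e].
Definition typeII (S : {set V}) (F : {set E}) (e1 e2 e : E) : Prop :=
  [/\ e \notin [set e1; e2], nonremovable S F e & nonremovable S (F :\ e1 :\ e2) e].

End Graphs.

(* Main.v *)
Require Import Defs.
From mathcomp Require Import all_boot.
From mathcomp Require Import zify.
Set Implicit Arguments. Unset Strict Implicit. Unset Printing Implicit Defensive.
Ltac revert_arith := repeat match goal with
  | H : is_true (_ <= _) |- _ => revert H
  | H : @eq nat _ _ |- _ => revert H
  end.
Ltac gen_cards := repeat match goal with |- context [#|?A|] => generalize #|A| end.
Ltac clear_ctx := repeat match goal with H : _ |- _ => clear H end.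
Ltac slia := revert_arith; gen_cards; clear_ctx; lia.

Section Hall.
Variables (V : finType) (r : rel V).

Definition nb (B X : {set V}) : {set V} := [set b in B | [exists a in X, r a b]].

Lemma nbS (B X Y : {set V}) : X \subset Y -> nb B X \subset nb B Y.
Proof.
move=> sXY; apply/subsetP=> b; rewrite !inE => /andP[-> /existsP[a /andP[aX rab]]].
by apply/existsP; exists a; rewrite (subsetP sXY).
Qed.

Lemma hall n : forall (A B : {set V}), #|A| <= n ->
  (forall X : {set V}, X \subset A -> #|X| <= #|nb B X|) ->
  exists g : V -> V, {in A &, injective g} /\ {in A, forall a, g a \in B /\ r a (g a)}.
Proof.
elim: n => [|n IH] A B.
  rewrite leqn0 cards_eq0 => /eqP -> _; exists id; split; first by move=> ? ? ?.
  by move=> a; rewrite inE.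
move=> cA hB.
have [A0|nzA] := eqVneq A set0.
  by exists id; split; [move=> ? ? ? | move=> a; rewrite A0 inE].
have [/existsP[X /and4P[sXA nzX nXA tX]]|notight] :=
  boolP [exists X : {set V}, [&& X \subset A, X != set0, X != A & #|nb B X| <= #|X|]].
-
  have ltX : #|X| < #|A| by rewrite proper_card // properEneq sXA nXA.
  have [g1 [inj1 h1]] := IH X B (ltac:(lia)) (fun Y sY => hB Y (subset_trans sY sXA)).
  set B' := B :\: nb B X.
  have ltAX : #|A :\: X| <= n.
    have := cardsD A X; rewrite (setIidPr sXA).
    have : 0 < #|X| by rewrite card_gt0. slia.
  have hB' : forall Y : {set V}, Y \subset A :\: X -> #|Y| <= #|nb B' Y|.
    move=> Y sY.
    have dXY : [disjoint X & Y].
      rewrite -setI_eq0; apply/eqP/setP=> z; rewrite !inE.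
      apply/negbTE; apply/negP=> /andP[zX zY].
      by have := subsetP sY z zY; rewrite inE zX.
    have sXYA : X :|: Y \subset A by rewrite subUset sXA (subset_trans sY) // subsetDl.
    have h1' := hB _ sXYA.
    rewrite cardsU (disjoint_setI0 dXY) cards0 subn0 in h1'.
    have sub : nb B (X :|: Y) :\: nb B X \subset nb B' Y.
      apply/subsetP=> b; rewrite !inE => /andP[nbX /andP[bB /existsP[a /andP[]]]].
      rewrite inE => /orP[aX rab|aY rab].
        by move: nbX; rewrite bB /=; case/existsP; exists a; rewrite aX.
      by rewrite nbX bB /=; apply/existsP; exists a; rewrite aY.
    have := subset_leq_card sub.
    rewrite cardsD (setIidPr (nbS _ (subsetUl X Y))). slia.
  have [g2 [inj2 h2]] := IH (A :\: X) B' ltAX hB'.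
  exists (fun a => if a \in X then g1 a else g2 a); split.
  + move=> a b aA bA /=.
    case: ifP => aX; case: ifP => bX.
    * by apply: inj1.
    * move=> eab; have bAX : b \in A :\: X by rewrite inE bX bA.
      have [g2B _] := h2 b bAX; move: g2B; rewrite inE -eab => /andP[/negP[]].
      have [g1B r1] := h1 a aX; by rewrite inE g1B; apply/existsP; exists a; rewrite aX.
    * move=> eab; have aAX : a \in A :\: X by rewrite inE aX aA.
      have [g2B _] := h2 a aAX; move: g2B; rewrite inE eab => /andP[/negP[]].
      have [g1B r1] := h1 b bX; by rewrite inE g1B; apply/existsP; exists b; rewrite bX.
    * by apply: inj2; rewrite inE ?aX ?bX ?aA ?bA.
  + move=> a aA /=; case: ifP => aX; first exact: h1.
    have aAX : a \in A :\: X by rewrite inE aX aA.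
    have [g2B r2] := h2 a aAX; split => //; move: g2B; rewrite inE; by case/andP.
-
  have strict : forall X : {set V}, X \subset A -> X != set0 -> X != A -> #|X| < #|nb B X|.
    move=> X sX nz nA; rewrite ltnNge; apply/negP=> le.
    by move/negP: notight; apply; apply/existsP; exists X; rewrite sX nz nA le.
  have [a0 a0A] := set0Pn _ nzA.
  have : 0 < #|nb B [set a0]|.
    have := hB [set a0]; rewrite sub1set a0A cards1; by move=> /(_ isT).
  rewrite card_gt0 => /set0Pn[b0]; rewrite inE => /andP[b0B /existsP[a1 /andP[]]].
  rewrite inE => /eqP -> ra0b0.
  set A' := A :\ a0; set B' := B :\ b0.
  have cA' : #|A'| <= n by move: cA; rewrite (cardsD1 a0 A) a0A /A' /=; slia.
  have hB' : forall Y : {set V}, Y \subset A' -> #|Y| <= #|nb B' Y|.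
    move=> Y sY; have [->|nzY] := eqVneq Y set0; first by rewrite cards0.
    have sYA : Y \subset A by rewrite (subset_trans sY) // subsetDl.
    have nYA : Y != A.
      by apply/eqP=> eYA; move: (subsetP sY a0); rewrite eYA a0A !inE eqxx => /(_ isT).
    have := strict Y sYA nzY nYA.
    have sub : nb B Y :\ b0 \subset nb B' Y.
      apply/subsetP=> b; rewrite !inE => /andP[-> /andP[-> ->]] //.
    have := subset_leq_card sub; have := cardsD1 b0 (nb B Y). slia.
  have [g' [inj' h']] := IH A' B' cA' hB'.
  exists (fun a => if a == a0 then b0 else g' a); split.
  + move=> a b aA bA /=.
    case: eqP => [->|na]; case: eqP => [->|nb'] //.
    * move=> e; have bA' : b \in A' by rewrite !inE bA andbT; apply/eqP.
      by have [] := h' b bA'; rewrite -e !inE eqxx.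
    * move=> e; have aA' : a \in A' by rewrite !inE aA andbT; apply/eqP.
      by have [] := h' a aA'; rewrite e !inE eqxx.
    * move=> e; apply: inj' e; rewrite !inE ?aA ?bA andbT; apply/eqP => //.
  + move=> a aA /=; case: eqP => [->//|na].
    have aA' : a \in A' by rewrite !inE aA andbT; apply/eqP.
    have [gB rg] := h' a aA'; split => //; move: gB; rewrite !inE; by case/andP.
Qed.
End Hall.

Section G.
Variables (V E : finType) (u v : E -> V).
Hypothesis loopless : forall e, u e != v e.
Local Notation adj := (adj u v).
Local Notation pm := (perfect_matching u v).
Local Notation inc := (incident u v).
Implicit Types (F M : {set E}) (S : {set V}).

Definition link (a b : V) (e : E) := ((u e == a) && (v e == b)) || ((v e == a) && (u e == b)).
Definition oth (e : E) (a : V) := if u e == a then v e else u e.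

Lemma adjP F a b : reflect (exists2 e, e \in F & link a b e) (adj F a b).
Proof.
apply: (iffP existsP) => [[e /andP[eF le]]|[e eF le]]; exists e => //.
by rewrite eF.
Qed.

Lemma link_sym a b e : link a b e = link b a e.
Proof. by rewrite /link; case: (u e == a); case: (v e == b); case: (u e == b); case: (v e == a). Qed.

Lemma adj_sym F a b : adj F a b = adj F b a.
Proof. by apply/adjP/adjP => -[e eF le]; exists e => //; rewrite link_sym. Qed.

Lemma adj_sub (F F' : {set E}) a b : F \subset F' -> adj F a b -> adj F' a b.
Proof. by move=> sF /adjP[e eF le]; apply/adjP; exists e => //; apply: (subsetP sF). Qed.

Lemma othu e : oth e (u e) = v e. Proof. by rewrite /oth eqxx. Qed.
Lemma othv e : oth e (v e) = u e. Proof. by rewrite /oth (negbTE (loopless e)). Qed.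
Lemma incE a e : inc e a -> a = u e \/ a = v e.
Proof. by rewrite /incident => /orP[]/eqP->; [left|right]. Qed.
Lemma linkE a b e : link a b e -> (a = u e /\ b = v e) \/ (a = v e /\ b = u e).
Proof. by rewrite /link => /orP[]/andP[/eqP-> /eqP->]; [left|right]. Qed.
Lemma inc_link a e : inc e a -> link a (oth e a) e.
Proof. by case/incE=> ->; rewrite ?othu ?othv /link !eqxx ?orbT. Qed.
Lemma link_oth a b e : link a b e -> oth e a = b.
Proof. by case/linkE=> -[-> ->]; rewrite ?othu ?othv. Qed.
Lemma inc_oth_neq a e : inc e a -> oth e a != a.
Proof. by case/incE=> ->; rewrite ?othu ?othv // eq_sym. Qed.
Lemma inc_oth a e : inc e a -> inc e (oth e a).
Proof. by case/incE=> ->; rewrite ?othu ?othv /incident !eqxx ?orbT. Qed.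
Lemma inc2_oth a b e : inc e a -> inc e b -> a != b -> oth e a = b.
Proof. by case/incE=> -> /incE[]->; rewrite ?eqxx ?othu ?othv. Qed.
Lemma link_inc a b e : link a b e -> inc e a /\ inc e b.
Proof. by case/linkE=> -[-> ->]; rewrite /incident !eqxx ?orbT. Qed.

Lemma pm_uniq S F M x e e' : pm S F M -> x \in S -> e \in M -> e' \in M ->
  inc e x -> inc e' x -> e = e'.
Proof.
move=> [_ h] xS eM e'M ie ie'; move/eqP: (h x xS); case/cards1P => z hz.
have : e \in [set e in M | inc e x] by rewrite inE eM ie.
have : e' \in [set e in M | inc e x] by rewrite inE e'M ie'.
by rewrite hz !inE => /eqP-> /eqP->.
Qed.

Lemma pm_ex S F M x : pm S F M -> x \in S -> exists2 e, e \in M & inc e x.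
Proof.
move=> [_ h] xS; move/eqP: (h x xS); case/cards1P => z hz.
have : z \in [set e in M | inc e x] by rewrite hz inE.
by rewrite inE => /andP[]; exists z.
Qed.

Lemma match_inj S F M (Y Z : {set V}) : pm S F M -> Y \subset S -> Z \subset S ->
  [disjoint Y & Z] ->
  (forall y e, y \in Y -> e \in M -> inc e y -> oth e y \in Z) -> #|Y| <= #|Z|.
Proof.
move=> hM sY sZ dYZ h.
pose g y := if [pick e in M | inc e y] is Some e then oth e y else y.
have gP : forall y, y \in Y -> exists2 e, e \in M & inc e y /\ g y = oth e y.
  move=> y yY; rewrite /g; case: pickP => [e /andP[eM ie]|none].
    by exists e.
  by have [e eM ie] := pm_ex hM (subsetP sY y yY); move: (none e); rewrite eM ie.
have inj : {in Y &, injective g}.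
  move=> y1 y2 y1Y y2Y.
  have [e1' e1M [i1 ->]] := gP y1 y1Y; have [e2' e2M [i2 ->]] := gP y2 y2Y => eq.
  have wZ := h y1 e1' y1Y e1M i1.
  have ee : e1' = e2'.
    apply: (pm_uniq hM (subsetP sZ _ wZ) e1M e2M); first exact: inc_oth.
    by rewrite eq; exact: inc_oth.
  subst e2'; apply/eqP; apply/negP => /negP ne.
  have := inc2_oth i1 i2 ne; rewrite eq => e2y.
  have : oth e1' y1 \in Y :&: Z by rewrite inE wZ eq e2y y2Y.
  by rewrite (disjoint_setI0 dYZ) inE.
rewrite -(card_in_imset inj); apply: subset_leq_card; apply/subsetP => w.
case/imsetP => y yY ->; have [e eM [ie ->]] := gP y yY; exact: h.
Qed.

End G.

Section G2.
Variables (V E : finType) (u v : E -> V).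
Hypothesis loopless : forall e, u e != v e.
Local Notation adj := (adj u v).
Local Notation pm := (perfect_matching u v).
Local Notation inc := (incident u v).
Implicit Types (F M : {set E}) (S : {set V}).

Lemma disjP (T : finType) (A B : {set T}) :
  (forall z, z \in A -> z \in B -> False) -> [disjoint A & B].
Proof.
move=> h; rewrite -setI_eq0; apply/eqP/setP => z; rewrite !inE.
by apply/negbTE/negP => /andP[] /h H /H.
Qed.

Definition cnt (P : {set V}) e : nat := (u e \in P) + (v e \in P).

Lemma card_sum_bool (T : finType) (M : {set T}) (p : pred T) :
  #|[set e in M | p e]| = \sum_(e in M) p e.
Proof.
rewrite -sum1_card big_mkcond /= [RHS]big_mkcond /=; apply: eq_bigr => e _.
by rewrite inE; case: (e \in M); case: (p e).
Qed.

Lemma parity F M (P : {set V}) : pm setT F M -> #|P| = \sum_(e in M) cnt P e.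
Proof.
move=> [_ h].
rewrite -sum1_card (eq_bigr (fun z => #|[set e in M | inc e z]|)); last first.
  by move=> z _; rewrite h // inE.
under eq_bigr do rewrite card_sum_bool.
rewrite exchange_big /=; apply: eq_bigr => e eM.
rewrite /cnt /incident.
have -> : \sum_(z in P) ((u e == z) || (v e == z) : nat) =
          \sum_(z in P) ((u e == z) + (v e == z)).
  apply: eq_bigr => z _; have := loopless e.
  by case: (u e =P z) => [->|]; case: (v e =P z) => [->|] //; rewrite eqxx.
rewrite big_split /=; congr (_ + _).
- have [uP|uP] := boolP (u e \in P).
    rewrite (bigD1 (u e)) //= eqxx big1 // => z /andP[_ nz]; by rewrite eq_sym (negbTE nz).
  by rewrite big1 // => z zP; case: eqP => // eu; move: uP; rewrite eu zP.
- have [uP|uP] := boolP (v e \in P).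
    rewrite (bigD1 (v e)) //= eqxx big1 // => z /andP[_ nz]; by rewrite eq_sym (negbTE nz).
  by rewrite big1 // => z zP; case: eqP => // eu; move: uP; rewrite eu zP.
Qed.

Lemma cntC (P : {set V}) e : cnt P e + cnt (~: P) e = 2.
Proof. by rewrite /cnt !inE; case: (u e \in P); case: (v e \in P). Qed.

Definition cross (P : {set V}) e := (u e \in P) != (v e \in P).

Lemma cnt_cross (P : {set V}) e : cross P e -> cnt P e = 1.
Proof. by rewrite /cross /cnt; case: (u e \in P); case: (v e \in P). Qed.

Lemma cross_cnt (P : {set V}) e : cnt P e = cnt (~: P) e -> cross P e.
Proof. by rewrite /cross /cnt !inE; case: (u e \in P); case: (v e \in P). Qed.

Lemma balance F M (P : {set V}) (D : {set E}) : pm setT F M -> #|P| = #|~: P| ->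
  (forall e, e \in M -> e \notin D -> cross P e) ->
  \sum_(e in M :&: D) cnt P e = \sum_(e in M :&: D) cnt (~: P) e.
Proof.
move=> hM cP hc.
have := parity P hM; have := parity (~: P) hM; rewrite -cP => h1 h2.
rewrite h2 in h1.
rewrite (bigID (fun e => e \in D)) /= [in X in _ = X](bigID (fun e => e \in D)) /= in h1.
have eqr : \sum_(i in M | i \notin D) cnt P i = \sum_(i in M | i \notin D) cnt (~: P) i.
  apply: eq_bigr => e /andP[eM eD].
  have := cnt_cross (hc e eM eD); have := cntC P e. slia.
rewrite eqr in h1.
have e1 : \sum_(e in M :&: D) cnt P e = \sum_(i in M | i \in D) cnt P i.
  by apply: eq_bigl => e; rewrite inE.
have e2 : \sum_(e in M :&: D) cnt (~: P) e = \sum_(i in M | i \in D) cnt (~: P) i.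
  by apply: eq_bigl => e; rewrite inE.
rewrite e1 e2; slia.
Qed.

Lemma closed_connect_in (r : rel V) (C : pred V) x z :
  (forall a b, r a b -> C a -> C b) -> connect r x z -> C x -> C z.
Proof.
move=> hC /connectP[p pth ->]; elim: p x pth => //= y p IH x /andP[rxy pth] Cx.
exact: IH pth (hC _ _ rxy Cx).
Qed.

End G2.

Section G3.
Variables (V E : finType) (u v : E -> V).
Hypothesis loopless : forall e, u e != v e.
Local Notation adj := (adj u v).
Local Notation pm := (perfect_matching u v).
Local Notation inc := (incident u v).
Local Notation link := (link u v).
Local Notation oth := (oth u v).
Local Notation cross := (cross u v).
Implicit Types (F M : {set E}) (S X Y Z P : {set V}).

Definition Nb F (X : {set V}) := nb (adj F) setT X.

Lemma NbP F X b : reflect (exists2 a, a \in X & adj F a b) (b \in Nb F X).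
Proof.
rewrite /Nb /nb !inE /=; apply: (iffP existsP) => [[a /andP[]]|[a aX h]]; first by exists a.
by exists a; rewrite aX.
Qed.

Lemma link_inc_eq a b e z : link a b e -> inc e z -> z = a \/ z = b.
Proof. by case/linkE => -[-> ->] /incE[]->; auto. Qed.

Lemma adj_cross F (P : {set V}) a b : (forall e, e \in F -> cross P e) ->
  adj F a b -> (a \in P) != (b \in P).
Proof.
move=> hc /adjP[e eF /linkE[][-> ->]]; have := hc e eF; rewrite /cross //.
by rewrite eq_sym.
Qed.

Lemma adj_sym' F : symmetric (adj F).
Proof. by move=> a b; rewrite adj_sym. Qed.

Lemma pm_of_ed F (P : {set V}) (g : V -> V) (ed : V -> E) :
  #|P| = #|~: P| -> {in P &, injective g} ->
  (forall a, a \in P -> [/\ ed a \in F, g a \in ~: P & link a (g a) (ed a)]) ->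
  pm setT F (ed @: P).
Proof.
move=> cP ginj h; split.
  by apply/subsetP=> e /imsetP[a aP ->]; have [] := h a aP.
move=> z _; apply/eqP/cards1P.
have [zP|zP] := boolP (z \in P).
  exists (ed z); apply/setP=> e; rewrite !inE; apply/andP/eqP.
    case=> /imsetP[a aP ->] ie; have [_ gaQ l] := h a aP.
    case: (link_inc_eq l ie) => [->//|ez]; by move: gaQ; rewrite -ez inE zP.
  move=> ->; split; first exact: imset_f.
  by have [_ _ l] := h z zP; case: (link_inc l).
have sub : g @: P \subset ~: P by apply/subsetP=> b /imsetP[a aP ->]; have [] := h a aP.
have : g @: P = ~: P.
  apply/eqP; rewrite eqEcard sub /= card_in_imset //; by rewrite cP.
move=> eqg; have : z \in g @: P by rewrite eqg inE.
case/imsetP => a0 a0P za0.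
exists (ed a0); apply/setP=> e; rewrite !inE; apply/andP/eqP.
  case=> /imsetP[a aP ->] ie; have [_ gaQ l] := h a aP.
  case: (link_inc_eq l ie) => ez; first by move: zP; rewrite ez aP.
  by rewrite (ginj a a0 aP a0P) // -ez.
move=> ->; split; first exact: imset_f.
by have [_ _ l] := h a0 a0P; case: (link_inc l); rewrite za0.
Qed.

Lemma hall_bound F (P X : {set V}) :
  matching_covered u v setT F -> (forall e, e \in F -> cross P e) ->
  X \subset P -> X != set0 -> X != P -> #|X| < #|Nb F X|.
Proof.
move=> [conn [_ adm]] hc sXP nzX nXP.
rewrite ltnNge; apply/negP => le.
have NQ : Nb F X \subset ~: P.
  apply/subsetP => b /NbP[a aX ab]; have := adj_cross hc ab.
  by rewrite (subsetP sXP a aX) inE; case: (b \in P).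
set C := X :|: Nb F X.
have [/existsP[a /existsP[b /and3P[ab aC bC]]]|nocross] :=
  boolP [exists a, exists b, [&& adj F a b, a \in C & b \notin C]].
- move: aC; rewrite inE => /orP[aX|aN].
    by move: bC; rewrite inE negb_or => /andP[_ /negP[]]; apply/NbP; exists a.
  have aQ : a \notin P by have := subsetP NQ a aN; rewrite inE.
  have bP : b \in P by have := adj_cross hc ab; rewrite (negbTE aQ); case: (b \in P).
  have bX : b \notin X by move: bC; rewrite inE negb_or => /andP[].
  case/adjP: ab => f fF lf.
  have [M [hM fM]] := adm f fF.
  have : #|X| <= #|Nb F X :\ a|.
    apply: (match_inj loopless hM (subsetT _) (subsetT _)).
  + apply: disjP => z zX; rewrite in_setD1 => /andP[_ zN]; have := subsetP NQ z zN; by rewrite inE (subsetP sXP z zX).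
  + move=> y e yX eM ie; rewrite in_setD1; apply/andP; split.
      apply/eqP => ea.
      have ef : e = f.
        apply: (pm_uniq hM (in_setT a) eM fM); first by rewrite -ea; exact: inc_oth.
        by case: (link_inc lf).
      subst e; case: (link_inc_eq lf ie) => ya.
        by move: aQ; rewrite -ya (subsetP sXP y yX).
      by move: bX; rewrite -ya yX.
    apply/NbP; exists y => //; apply/adjP; exists e; last exact: inc_link.
    by apply: (subsetP hM.1).
  move=> h; move: le; rewrite (cardsD1 a (Nb F X)) aN /=; slia.
- have [x0 x0X] := set0Pn _ nzX.
  have [p0 p0P p0X] : exists2 p0, p0 \in P & p0 \notin X.
    apply/exists_inP; rewrite -negb_forall_in; apply/negP => /forall_inP h.
    by move/negP: nXP; apply; rewrite eqEsubset sXP; apply/subsetP => z /h.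
  have : p0 \in C.
    apply: (@closed_connect_in _ (adj F) (fun z => z \in C) x0 p0).
  + move=> a b ab /= aC; apply/negPn/negP => bC; move/negP: nocross; apply.
    by apply/existsP; exists a; apply/existsP; exists b; rewrite ab aC bC.
  + exact: conn.
  + by rewrite inE x0X.
  rewrite inE (negbTE p0X) /= => pN; have := subsetP NQ p0 pN; by rewrite inE p0P.
Qed.

End G3.

Section G4.
Variables (V E : finType) (u v : E -> V).
Hypothesis loopless : forall e, u e != v e.
Local Notation adj := (adj u v).
Local Notation pm := (perfect_matching u v).
Local Notation inc := (incident u v).
Local Notation link := (link u v).
Local Notation oth := (oth u v).
Local Notation cross := (cross u v).
Local Notation Nb := (Nb u v).
Implicit Types (F M : {set E}) (S X Y Z P : {set V}).

Lemma adm_of_hall F P : (forall e, e \in F -> cross P e) -> #|P| = #|~: P| ->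
  (forall X, X \subset P -> X != set0 -> X != P -> #|X| < #|Nb F X|) ->
  forall f, f \in F -> admissible u v setT F f.
Proof.
move=> hc cP hb f fF.
pose p := if u f \in P then u f else v f.
have [pP lf] : p \in P /\ link p (oth f p) f.
  rewrite /p; have := hc f fF; rewrite /cross.
  case: ifP => uP /= cr; (split; [by move: cr uP; case: (u f \in P); case: (v f \in P)
     | rewrite ?othu ?(othv loopless) /link !eqxx ?orbT //]).
set q := oth f p.
have qQ : q \notin P.
  have := hc f fF; rewrite /cross; case/linkE: (lf) => -[ep eq]; rewrite /q eq;
  by rewrite ep in pP; move: pP; case: (u f \in P); case: (v f \in P).
have hh : forall Y : {set V}, Y \subset P :\ p -> #|Y| <= #|nb (adj F) (~: P :\ q) Y|.
  move=> Y sY; have [->|nzY] := eqVneq Y set0; first by rewrite cards0.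
  have sYP : Y \subset P by rewrite (subset_trans sY) // subsetDl.
  have nYP : Y != P.
    by apply/eqP=> eYP; have := subsetP sY p; rewrite eYP pP !inE eqxx => /(_ isT).
  have h1 := hb Y sYP nzY nYP.
  have sub : Nb F Y :\ q \subset nb (adj F) (~: P :\ q) Y.
    apply/subsetP => b; rewrite in_setD1 => /andP[nbq /NbP[a aY ab]].
    rewrite /nb !inE nbq /=; apply/andP; split; last by apply/existsP; exists a; rewrite aY.
    have := adj_cross hc ab; by rewrite (subsetP sYP a aY); case: (b \in P).
  have := subset_leq_card sub; have := cardsD1 q (Nb F Y).
  case: (q \in Nb F Y) => /=; slia.
have [g' [inj' hg']] := @hall _ (adj F) #|P :\ p| (P :\ p) (~: P :\ q) (leqnn _) hh.
pose g a := if a == p then q else g' a.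
pose ed a := if a == p then f else odflt f [pick e in F | link a (g' a) e].
exists (ed @: P); split; last by apply/imsetP; exists p => //; rewrite /ed eqxx.
apply: (pm_of_ed (g := g)) => //.
- move=> a b aP bP; rewrite /g.
  case: eqP => [->|nap]; case: eqP => [->|nbp] //.
  + move=> e; have bP' : b \in P :\ p by rewrite in_setD1 bP andbT; apply/eqP.
    by have [] := hg' b bP'; rewrite -e !inE eqxx.
  + move=> e; have aP' : a \in P :\ p by rewrite in_setD1 aP andbT; apply/eqP.
    by have [] := hg' a aP'; rewrite e !inE eqxx.
  + move=> e; apply: inj' e; rewrite in_setD1 ?aP ?bP andbT; apply/eqP => //.
- move=> a aP; rewrite /g /ed; case: eqP => [->|nap].
    by split => //; rewrite inE.
  have aP' : a \in P :\ p by rewrite in_setD1 aP andbT; apply/eqP.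
  have [gB /adjP[e0 e0F l0]] := hg' a aP'.
  case: pickP => [e /andP[eF le]|none]; last by move: (none e0); rewrite e0F l0.
  split => //; move: gB; rewrite !inE; by case/andP.
Qed.

Lemma inc_adj F e y : e \in F -> inc e y -> adj F y (oth e y).
Proof. by move=> eF ie; apply/adjP; exists e => //; apply: inc_link. Qed.

Lemma mc_of_hall F P : (forall e, e \in F -> cross P e) -> #|P| = #|~: P| -> 2 <= #|P| ->
  (forall X, X \subset P -> X != set0 -> X != P -> #|X| < #|Nb F X|) ->
  matching_covered u v setT F.
Proof.
move=> hc cP c2 hb.
have adm := adm_of_hall hc cP hb.
have [p0 p0P] : exists p0, p0 \in P.
  by apply/set0Pn; rewrite -card_gt0; slia.
have [b0 /NbP[a0 a0i ab0]] : exists b0, b0 \in Nb F [set p0].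
  apply/set0Pn; rewrite -card_gt0.
  have h1 : [set p0] \subset P by rewrite sub1set.
  have h2 : [set p0] != set0 by apply/set0Pn; exists p0; rewrite inE.
  have h3 : [set p0] != P by apply/eqP => e; move: c2; rewrite -e cards1.
  have := hb _ h1 h2 h3; rewrite cards1; slia.
case/adjP: ab0 => f0 f0F _.
have [M0 [hM0 _]] := adm f0 f0F.
have reach : forall z, connect (adj F) p0 z.
  set C := [set z | connect (adj F) p0 z].
  have PC : P \subset C.
    apply/negPn/negP => nPC.
    set X := P :&: C.
    have nXP : X != P by apply: contra nPC => /eqP <-; apply: subsetIr.
    have nzX : X != set0 by apply/set0Pn; exists p0; rewrite !inE p0P connect0.
    have := hb X (subsetIl _ _) nzX nXP.
    have sN : Nb F X \subset ~: P :&: C.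
      apply/subsetP => b /NbP[a]; rewrite !inE => /andP[aP ca] ab.
      apply/andP; split.
        by have := adj_cross hc ab; rewrite aP; case: (b \in P).
      exact: connect_trans ca (connect1 ab).
    have := subset_leq_card sN.
    have : #|~: P :&: C| <= #|X|.
      apply: (match_inj loopless hM0 (subsetT _) (subsetT _)).
        apply: disjP => z; rewrite !inE => /andP[zP _] /andP[zP' _].
        by move: zP; rewrite zP'.
      move=> y e; rewrite !inE => /andP[yP cy] eM ie.
      have ad := inc_adj (subsetP hM0.1 e eM) ie.
      apply/andP; split.
        by have := adj_cross hc ad; move: yP; case: (y \in P); case: (oth e y \in P).
      exact: connect_trans cy (connect1 ad).
    slia.
  move=> z; have [zP|zP] := boolP (z \in P).
    by have := subsetP PC z zP; rewrite inE.
  have [e eM ie] := pm_ex hM0 (in_setT z).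
  have ad := inc_adj (subsetP hM0.1 e eM) ie.
  have wP : oth e z \in P.
    by have := adj_cross hc ad; move: zP; case: (z \in P); case: (oth e z \in P).
  have := subsetP PC _ wP; rewrite inE => cw.
  by apply: connect_trans cw (connect1 _); rewrite adj_sym.
split; last split.
- move=> x y _ _; apply: connect_trans (reach y).
  by rewrite (sym_connect_sym (@adj_sym' _ _ u v F)).
- have := cardsC P; rewrite cardsT; slia.
- exact: adm.
Qed.


Lemma conn_del F e : k_connected u v 3 setT F -> connected_graph u v setT (F :\ e).
Proof.
move=> [c3 hk].
have [w wn] : exists w, w \notin [set u e; v e].
  have : 0 < #|~: [set u e; v e]|.
    have := cardsC [set u e; v e]; have := cards2 (u e) (v e).
    have := leq_b1 (u e != v e); rewrite cardsT in c3; slia.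
  by rewrite card_gt0 => /set0Pn[w]; rewrite inE => wn; exists w.
have viaw : forall a, connect (adj (F :\ e)) a w /\ connect (adj (F :\ e)) w a.
  move=> a.
  have key : forall z, z != a -> z != w -> e \notin edges_avoiding u v F [set z] ->
      connect (adj (F :\ e)) a w /\ connect (adj (F :\ e)) w a.
    move=> z za zw ne.
    have := hk [set z] (subsetT _) (ltac:(by rewrite cards1)).
    move=> hc.
    have sub : forall x y, connect (adj (edges_avoiding u v F [set z])) x y ->
        connect (adj (F :\ e)) x y.
      apply: connect_sub => x y xy; apply: connect1; apply: adj_sub xy.
      apply/subsetP => f; rewrite !inE => /andP[fF fz]; rewrite fF andbT.
      by apply/eqP => fe; move: ne; rewrite -fe !inE fF fz.
    have az : a != z by rewrite eq_sym.
    have wz : w != z by rewrite eq_sym.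
    by split; apply: sub; apply: hc; rewrite !inE ?az ?wz.
  move: wn; rewrite !inE negb_or => /andP[wu wv].
  have [au|au] := eqVneq a (u e).
    apply: (key (v e)).
    - by rewrite au eq_sym.
    - by rewrite eq_sym.
    - by rewrite !inE eqxx ?andbT ?andbF.
  apply: (key (u e)).
  - by rewrite eq_sym.
  - by rewrite eq_sym.
  - by rewrite !inE eqxx ?andbF.
move=> a b _ _; exact: connect_trans (viaw a).1 (viaw b).2.
Qed.

End G4.

Section Main.
Variables (V E : finType) (u v : E -> V).
Hypothesis loopless : forall e, u e != v e.
Variables (e1 e2 : E).
Hypothesis Gnb : near_bipartite u v [set: V] [set: E].
Hypothesis Gbrick : brick u v [set: V] [set: E].
Hypothesis hdb : removable_doubleton u v [set: V] [set: E] e1 e2.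
Variable (A : {set V}).
Hypothesis hA : forall e, e \in [set: E] :\ e1 :\ e2 -> (u e \in A) != (v e \in A).
Variable x : V.
Local Notation H := ([set: E] :\ e1 :\ e2).
Local Notation adj := (adj u v).
Local Notation pm := (perfect_matching u v).
Local Notation inc := (incident u v).
Local Notation link := (link u v).
Local Notation oth := (oth u v).
Local Notation cross := (cross u v).
Local Notation cnt := (cnt u v).
Local Notation Nb := (Nb u v).
Implicit Types (F M T : {set E}) (S X Y Z Xi Xj Xk : {set V}).

Definition P := if x \in A then A else ~: A.

Lemma mcG : matching_covered u v setT setT. Proof. by case: Gnb. Qed.
Lemma mcH : matching_covered u v setT H. Proof. by case: hdb. Qed.
Lemma ne12 : e1 != e2. Proof. by case: hdb. Qed.

Lemma hcP e : e \in H -> cross P e.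
Proof. move/hA; rewrite /cross /P; case: ifP => // _; by rewrite !inE; case: (u e \in A); case: (v e \in A). Qed.

Lemma xP : x \in P.
Proof. by rewrite /P; case: ifP => // /negbT; rewrite inE. Qed.

Lemma inH e : e \notin [set e1; e2] -> e \in H.
Proof. by rewrite !inE negb_or => /andP[-> ->]. Qed.

Lemma mc_pm F : matching_covered u v setT F -> exists M, pm setT F M.
Proof.
case=> conn [c2 adm].
have [a [b [_ _ ab]]] : exists a b, [/\ a \in [set: V], b \in [set: V] & a != b].
  by apply/card_gt1P.
have := conn a b (in_setT a) (in_setT b); case/connectP => p.
case: p => [_ eab|c p /= /andP[ac _] _]; first by move: ab; rewrite eab eqxx.
case/adjP: ac => f fF _; have [M [hM _]] := adm f fF; by exists M.
Qed.

Lemma pm_mono S F F' M : F \subset F' -> pm S F M -> pm S F' M.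
Proof. by move=> sF [sM h]; split => //; apply: subset_trans sF. Qed.

Lemma cPQ : #|P| = #|~: P|.
Proof.
have [M hM] := mc_pm mcH.
rewrite (parity loopless P hM) (parity loopless (~: P) hM).
apply: eq_bigr => e eM; have c := hcP (subsetP hM.1 e eM).
have := cntC u v P e; rewrite (cnt_cross c); slia.
Qed.

Lemma V4 : 3 < #|P| + #|~: P|.
Proof. by rewrite cardsC -cardsT; case: Gbrick => -[]. Qed.

Lemma P2 : 2 <= #|P|.
Proof. have := V4; rewrite -cPQ; slia. Qed.

Lemma sum2 (c : E -> nat) M :
  \sum_(e in M :&: [set e1; e2]) c e = (e1 \in M) * c e1 + (e2 \in M) * c e2.
Proof.
have ne := ne12.
have ne' : e2 != e1 by rewrite eq_sym.
have st : forall e, e \in M :&: [set e1; e2] = ((e == e1) && (e1 \in M)) || ((e == e2) && (e2 \in M)).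
  move=> e; rewrite !inE; have [->|n1] := eqVneq e e1.
    by rewrite ?eqxx (negbTE ne) /= ?andbT ?orbF; case: (e1 \in M).
  have [->|n2] := eqVneq e e2; last by rewrite /= andbF.
  by rewrite ?eqxx /= ?andbT ?orbF; case: (e2 \in M).
have [h1|h1] := boolP (e1 \in M); have [h2|h2] := boolP (e2 \in M).
- have -> : M :&: [set e1; e2] = [set e1; e2].
    by apply/setP => e; rewrite st h1 h2 !inE !andbT.
  rewrite big_setU1 /= ?big_set1 ?inE ?mul1n //; by rewrite eq_sym.
- have -> : M :&: [set e1; e2] = [set e1].
    by apply/setP => e; rewrite st (negbTE h2) h1 !inE andbT andbF orbF.
  by rewrite big_set1 /= mul1n mul0n addn0.
- have -> : M :&: [set e1; e2] = [set e2].
    by apply/setP => e; rewrite st (negbTE h1) h2 !inE andbT andbF.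
  by rewrite big_set1 /= mul1n mul0n.
- have -> : M :&: [set e1; e2] = set0.
    by apply/setP => e; rewrite st (negbTE h1) (negbTE h2) !inE !andbF.
  by rewrite big_set0 /= !mul0n.
Qed.


Lemma bal M : pm setT setT M ->
  (e1 \in M) * cnt P e1 + (e2 \in M) * cnt P e2 =
  (e1 \in M) * cnt (~: P) e1 + (e2 \in M) * cnt (~: P) e2.
Proof.
move=> hM; have := @balance _ _ u v loopless setT M P [set e1; e2] hM cPQ.
rewrite !sum2; apply => e _ eD; apply: hcP; exact: inH.
Qed.

Lemma bipG : cross P e1 -> cross P e2 -> False.
Proof.
move=> c1 c2; case: Gnb => _ nb _; apply: nb; exists P => e _.
have [eD|eD] := boolP (e \in [set e1; e2]); last exact: (hcP (inH eD)).
by move: eD; rewrite !inE => /orP[]/eqP->.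
Qed.

Lemma ncross1 : ~~ cross P e1.
Proof.
apply/negP => c1; have [M [hM e2M]] := mcG.2.2 e2 (in_setT e2).
have := bal hM; rewrite e2M; have := cntC u v P e1; have := cntC u v P e2.
rewrite (cnt_cross c1) => h2 h1 h.
have : cnt P e2 = cnt (~: P) e2 by move: h; case: (e1 \in M) => /=; slia.
by move/cross_cnt; apply: bipG.
Qed.

Lemma ncross2 : ~~ cross P e2.
Proof.
apply/negP => c2; have [M [hM e1M]] := mcG.2.2 e1 (in_setT e1).
have := bal hM; rewrite e1M; have := cntC u v P e1; have := cntC u v P e2.
rewrite (cnt_cross c2) => h2 h1 h.
have : cnt P e1 = cnt (~: P) e1 by move: h; case: (e2 \in M) => /=; slia.
by move/cross_cnt => c1; apply: bipG.
Qed.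

Lemma ncnt e : ~~ cross P e ->
  (cnt P e = 2 /\ cnt (~: P) e = 0) \/ (cnt P e = 0 /\ cnt (~: P) e = 2).
Proof. by rewrite /cross /cnt !inE; case: (u e \in P); case: (v e \in P); auto. Qed.

Lemma e1e2 M : pm setT setT M -> (e1 \in M) = (e2 \in M).
Proof.
move=> hM; have := bal hM.
case: (ncnt ncross1) => -[-> ->]; case: (ncnt ncross2) => -[-> ->];
by case: (e1 \in M); case: (e2 \in M).
Qed.

Lemma cnt2P e y : cnt P e = 2 -> inc e y -> y \in P.
Proof. by rewrite /cnt => h /incE[]->; move: h; case: (u e \in P); case: (v e \in P). Qed.

Lemma eQ_ex : exists eQ, forall e y, e \in [set e1; e2] -> y \notin P -> inc e y -> e = eQ.
Proof.
have [M [hM e1M]] := mcG.2.2 e1 (in_setT e1).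
have e2M : e2 \in M by rewrite -(e1e2 hM).
have := bal hM; rewrite e1M e2M /=.
case: (ncnt ncross1) => -[h1 h1']; case: (ncnt ncross2) => -[h2 h2']; rewrite h1 h1' h2 h2' //.
- move=> _; exists e2 => e y; rewrite !inE => /orP[]/eqP-> yP ie //.
  by move: yP; rewrite (cnt2P h1 ie).
- move=> _; exists e1 => e y; rewrite !inE => /orP[]/eqP-> yP ie //.
  by move: yP; rewrite (cnt2P h2 ie).
Qed.


Lemma typeI_M e : typeI u v [set: V] [set: E] e1 e2 e ->
  forall M, pm [set: V] [set: E] M -> e1 \in M -> e \in M.
Proof.
case=> eD [_ nrem] [_ mcHe] M hM e1M.
apply/negPn/negP => eM; apply: nrem; split; first exact: in_setT.
have sM : M \subset [set: E] :\ e.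
  by apply/subsetP => g gM; rewrite in_setD1 in_setT andbT; apply: contraNneq eM => <-.
split; first by case: Gbrick => k3 _ _; exact: conn_del.
split; first by case: mcG => _ [].
move=> f; rewrite in_setD1 => /andP[fe _].
have [fD|fD] := boolP (f \in [set e1; e2]).
  exists M; split; first by split => //; case: hM.
  by move: fD; rewrite !inE => /orP[]/eqP->; rewrite -?(e1e2 hM).
have [M' [hM' fM']] := mcHe.2.2 f (ltac:(by rewrite in_setD1 fe inH)).
exists M'; split => //; apply: pm_mono hM'.
by apply/subsetP => g; rewrite !inE => /and3P[-> _ _].
Qed.

Lemma partI (T : {set E}) : (forall e, e \in T -> inc e x /\ typeI u v [set: V] [set: E] e1 e2 e) -> #|T| <= 1.
Proof.
move=> hT; rewrite leqNgt; apply/negP => /card_gt1P[a [b [aT bT ab]]].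
have [M [hM e1M]] := mcG.2.2 e1 (in_setT e1).
have [ia ta] := hT a aT; have [ib tb] := hT b bT.
have := pm_uniq hM (in_setT x) (typeI_M ta hM e1M) (typeI_M tb hM e1M) ia ib.
by move/eqP; rewrite (negbTE ab).
Qed.

Lemma end_in_P e a : e \in H -> inc e x -> inc e a -> a \in P -> a = x.
Proof.
move=> eH ix ia aP; have := hcP eH; have := xP; rewrite /cross.
by case/incE: ix => ->; case/incE: ia aP => -> // ->->.
Qed.

Lemma y_notP e : e \in H -> inc e x -> oth e x \notin P.
Proof.
move=> eH ix; apply/negP => yP.
have := end_in_P eH ix (inc_oth loopless ix) yP.
by move/eqP; rewrite (negbTE (inc_oth_neq loopless ix)).
Qed.

Lemma Nb_mono F F' X X' : F \subset F' -> X \subset X' -> Nb F X \subset Nb F' X'.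
Proof.
move=> sF sX; apply/subsetP => b /NbP[a aX ab]; apply/NbP; exists a.
  exact: subsetP sX a aX.
exact: adj_sub sF ab.
Qed.

Lemma Nb_Q F X : (forall e, e \in F -> cross P e) -> X \subset P -> Nb F X \subset ~: P.
Proof.
move=> hc sX; apply/subsetP => b /NbP[a aX ab]; have := adj_cross hc ab.
by rewrite (subsetP sX a aX) inE; case: (b \in P).
Qed.

Lemma NbH_gen e X b : e \in H -> inc e x -> X \subset P -> b \in Nb H X ->
  b \in Nb (H :\ e) X \/ (x \in X /\ b = oth e x).
Proof.
move=> eH ix sX /NbP[a aX /adjP[f fH lf]].
have [fe|fe] := eqVneq f e.
  subst f; right; have [ia ib] := link_inc lf.
  have ax := end_in_P eH ix ia (subsetP sX a aX); subst a.
  by split => //; rewrite (link_oth loopless lf).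
by left; apply/NbP; exists a => //; apply/adjP; exists f => //; rewrite in_setD1 fe.
Qed.

Lemma yin ei ej Xj : ei \in H -> inc ei x -> ei != ej -> x \in Xj ->
  oth ei x \in Nb (H :\ ej) Xj.
Proof.
move=> eH ix ne xX; apply/NbP; exists x => //; apply/adjP; exists ei.
  by rewrite in_setD1 ne.
exact: inc_link.
Qed.

Lemma defic e : e \in H -> inc e x -> nonremovable u v [set: V] H e ->
  exists X, [/\ x \in X, X \subset P, X != P, #|Nb (H :\ e) X| <= #|X|
               & oth e x \notin Nb (H :\ e) X].
Proof.
move=> eH ix [_ nrem].
have hcP' : forall f, f \in H :\ e -> cross P f.
  by move=> f; rewrite in_setD1 => /andP[_ /hcP].
have [hall|nhall] := boolP [forall X : {set V},
   ((X \subset P) && (X != set0) && (X != P)) ==> (#|X| < #|Nb (H :\ e) X|)].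
  exfalso; apply: nrem; split => //.
  apply: (mc_of_hall loopless hcP' cPQ P2) => X sX nz nX.
  by move/forallP: hall => /(_ X); rewrite sX nz nX.
case/forallPn: nhall => X; rewrite negb_imply -leqNgt => /andP[/andP[/andP[sXP nz] nXP] le].
have hb := hall_bound loopless mcH hcP sXP nz nXP.
have xX : x \in X.
  apply/negPn/negP => xX.
  have : Nb H X \subset Nb (H :\ e) X.
    apply/subsetP => b bN; case: (NbH_gen eH ix sXP bN) => // -[xX' _].
    by move: xX; rewrite xX'.
  move/subset_leq_card; slia.
exists X; split => //.
apply/negP => yN.
have : Nb H X \subset Nb (H :\ e) X.
  by apply/subsetP => b bN; case: (NbH_gen eH ix sXP bN) => // -[_ ->].
move/subset_leq_card; slia.
Qed.


Lemma Ymeets e X eQ : e \in H -> inc e x -> x \in X -> X \subset P -> X != P ->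
  #|Nb (H :\ e) X| <= #|X| ->
  (forall f y, f \in [set e1; e2] -> y \notin P -> inc f y -> f = eQ) ->
  (u eQ \in ~: P :\: Nb (H :\ e) X) || (v eQ \in ~: P :\: Nb (H :\ e) X).
Proof.
move=> eH ix xX sXP nXP le heQ.
set T' := Nb (H :\ e) X; set Y := ~: P :\: T'.
apply/negPn/negP; rewrite negb_or => /andP[nu nv].
have [s sP sX] : exists2 s, s \in P & s \notin X.
  apply/exists_inP; rewrite -negb_forall_in; apply/negP => /forall_inP h.
  by move/negP: nXP; apply; rewrite eqEsubset sXP; apply/subsetP => z /h.
have xs : x != s by apply: contraNneq sX => <-.
have [M hM] : exists M, pm ([set: V] :\ x :\ s) (edges_avoiding u v [set: E] [set x; s]) M.
  by case: Gbrick => _ _ bic; apply: bic.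
have hcP' : forall f, f \in H :\ e -> cross P f.
  by move=> f; rewrite in_setD1 => /andP[_ /hcP].
have sTQ : T' \subset ~: P by apply: Nb_Q.
have : #|Y| <= #|(P :\: X) :\ s|.
  apply: (match_inj loopless hM).
  - apply/subsetP => y; rewrite !inE => /andP[_ yP]; rewrite andbT.
    by apply/andP; split; apply: contraNneq yP => ->; [exact: sP | exact: xP].
  - apply/subsetP => z; rewrite !inE => /andP[zs /andP[zX _]]; rewrite zs andbT.
    by apply: contraNneq zX => ->.
  - by apply: disjP => z; rewrite !inE => /andP[_ zP] /andP[_ /andP[_ zP']]; move: zP; rewrite zP'.
  - move=> y m yY mM im.
    have yT : y \notin T' by move: yY; rewrite in_setD => /andP[].
    have yP : y \notin P by move: yY; rewrite in_setD in_setC => /andP[].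
    have := subsetP hM.1 m mM; rewrite !inE => /andP[_ /andP[um vm]].
    move: um vm; rewrite !negb_or => /andP[umx ums] /andP[vmx vms].
    have mD : m \notin [set e1; e2].
      apply/negP => mD; have := heQ m y mD yP im => me; subst m.
      by case/incE: im => ye; [move: nu | move: nv]; rewrite /Y in_setD in_setC -ye yP yT.
    have mH := inH mD.
    have ad' : adj H y (oth m y) by apply/adjP; exists m => //; exact: inc_link.
    have wP : oth m y \in P.
      by have := adj_cross hcP ad'; move: yP; case: (y \in P); case: (oth m y \in P).
    have me : m != e.
      apply/eqP => me; subst m; by case/incE: ix => xe; [move: umx | move: vmx]; rewrite xe eqxx.
    have wend := inc_oth loopless im.
    apply/and3P; split.
    + by case/incE: wend => ->.
    + apply/negP => wX; move: yT => /negP; apply; apply/NbP; exists (oth m y) => //.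
      apply/adjP; exists m; first by rewrite in_setD1 me.
      by rewrite link_sym; exact: inc_link.
    + exact: wP.
have cY : #|Y| = #|~: P| - #|T'| by rewrite /Y cardsD (setIidPr sTQ).
have cZ : #|(P :\: X) :\ s| = #|P| - #|X| - 1.
  have := cardsD1 s (P :\: X); rewrite !inE sX sP /=.
  rewrite cardsD (setIidPr sXP); slia.
have : #|X| < #|P|.
  rewrite proper_card // properEneq sXP nXP //.
have le' : #|T'| <= #|X| := le.
have := cPQ; slia.
Qed.

Lemma Ydisj1 ei ej Xi Xj q w m : ei \in H -> ej \in H -> inc ei x -> inc ej x -> ei != ej ->
  x \in Xj -> w \in Xi -> m \in H -> link w q m -> w \in P ->
  q \in ~: P :\: Nb (H :\ ei) Xi -> q \in ~: P :\: Nb (H :\ ej) Xj -> False.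
Proof.
move=> eiH ejH ix jx nij xXj wXi mH lm wP.
rewrite !in_setD => /andP[qi qP] /andP[qj _].
have [me|me] := eqVneq m ei.
  subst m; have [iw iq] := link_inc lm.
  have wx := end_in_P eiH ix iw wP; subst w.
  have := yin eiH ix nij xXj; by rewrite (link_oth loopless lm) (negbTE qj).
move/negP: qi; apply; apply/NbP; exists w => //; apply/adjP; exists m => //.
by rewrite in_setD1 me.
Qed.

Lemma Ydisj ei ej Xi Xj q : ei \in H -> ej \in H -> inc ei x -> inc ej x -> ei != ej ->
  x \in Xi -> x \in Xj -> Xi :|: Xj = P ->
  q \in ~: P :\: Nb (H :\ ei) Xi -> q \in ~: P :\: Nb (H :\ ej) Xj -> False.
Proof.
move=> eiH ejH ix jx nij xXi xXj U qi qj.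
have [M0 hM0] := mc_pm mcH.
have [m mM im] := pm_ex hM0 (in_setT q).
have mH := subsetP hM0.1 m mM.
set w := oth m q.
have lm : link w q m by rewrite link_sym; exact: inc_link.
have wP : w \in P.
  have ad : adj H q w by apply/adjP; exists m => //; rewrite link_sym.
  have := adj_cross hcP ad; move: qi; rewrite !inE => /andP[_ qP].
  by move: qP; case: (q \in P); case: (w \in P).
have : w \in Xi :|: Xj by rewrite U.
rewrite inE => /orP[wX|wX].
  exact: (Ydisj1 eiH ejH ix jx nij xXj wX mH lm wP qi qj).
have nji : ej != ei by rewrite eq_sym.
exact: (Ydisj1 ejH eiH jx ix nji xXi wX mH lm wP qj qi).
Qed.


Lemma NbH_one e X : e \in H -> inc e x -> X \subset P ->
  Nb H X \subset oth e x |: Nb (H :\ e) X.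
Proof.
move=> eH ix sX; apply/subsetP => b bN; rewrite in_setU1.
by case: (NbH_gen eH ix sX bN) => [->|[_ ->]]; rewrite ?eqxx ?orbT.
Qed.

Lemma case1 ei ej ek Xi Xj :
  ei \in H -> ej \in H -> ek \in H -> inc ei x -> inc ej x -> inc ek x ->
  ei != ej -> ei != ek -> ej != ek ->
  x \in Xi -> x \in Xj -> Xi \subset P -> Xj \subset P ->
  #|Nb (H :\ ei) Xi| <= #|Xi| -> #|Nb (H :\ ej) Xj| <= #|Xj| ->
  oth ei x \notin Nb (H :\ ei) Xi -> oth ej x \notin Nb (H :\ ej) Xj ->
  Xi :|: Xj != P -> False.
Proof.
move=> eiH ejH ekH ix jx kx nij nik njk xi xj sXi sXj lei lej yiN yjN nWP.
have cN : forall e X, e \in H -> inc e x -> X \subset P ->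
    #|Nb (H :\ e) X| <= #|X| -> #|Nb H X| <= #|X| + 1.
  move=> e X eH ix' sX le; have := subset_leq_card (NbH_one eH ix' sX).
  rewrite cardsU1; have := leq_b1 (oth e x \notin Nb (H :\ e) X); slia.
have cNi := cN _ _ eiH ix sXi lei; have cNj := cN _ _ ejH jx sXj lej.
set W := Xi :|: Xj.
have sWP : W \subset P by rewrite subUset sXi sXj.
have nzW : W != set0 by apply/set0Pn; exists x; rewrite inE xi.
have hW := hall_bound loopless mcH hcP sWP nzW nWP.
have sNW : Nb H W \subset Nb H Xi :|: Nb H Xj.
  apply/subsetP => b /NbP[a]; rewrite inE => /orP[aX|aX] ab; rewrite inE; apply/orP;
  [left|right]; apply/NbP; by exists a.
set Z := Xi :&: Xj.
have sNZ : Nb H Z \subset Nb H Xi :&: Nb H Xj.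
  by rewrite subsetI !Nb_mono ?subsetIl ?subsetIr.
have cUI := cardsUI Xi Xj; have cUIN := cardsUI (Nb H Xi) (Nb H Xj).
have cNZ : #|Nb H Z| <= #|Z| + 1.
  have := subset_leq_card sNW; have := subset_leq_card sNZ.
  rewrite /W /Z in hW *; slia.
set Z' := Z :\ x.
have xZ : x \in Z by rewrite inE xi xj.
have yinZ : forall e, e \in H -> inc e x -> oth e x \in Nb H Z.
  move=> e eH ix'; apply/NbP; exists x => //; exact: inc_adj.
have ynZ' : forall e X, e \in H -> inc e x -> Z \subset X -> X \subset P ->
    oth e x \notin Nb (H :\ e) X -> oth e x \notin Nb H Z'.
  move=> e X eH ix' sZX sX yN; apply/negP => yN'.
  have sZ'P : Z' \subset P by apply: subset_trans (subsetDl _ _) (subset_trans sZX sX).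
  case: (NbH_gen eH ix' sZ'P yN') => [h|[xZ' _]]; last by move: xZ'; rewrite !inE eqxx.
  move/negP: yN; apply; apply: (subsetP (Nb_mono (subxx _) _) _ h).
  exact: subset_trans (subsetDl _ _) sZX.
have yiZ' := ynZ' _ _ eiH ix (subsetIl _ _) sXi yiN.
have yjZ' := ynZ' _ _ ejH jx (subsetIr _ _) sXj yjN.
have yij : oth ei x != oth ej x.
  by apply: contraNneq yiN => ->; apply: yin => //; rewrite eq_sym.
have yki : oth ek x != oth ei x.
  by apply: contraNneq yiN => <-; apply: yin => //; rewrite eq_sym.
have ykj : oth ek x != oth ej x.
  by apply: contraNneq yjN => <-; apply: yin => //; rewrite eq_sym.
have sZ' : Nb H Z' \subset Nb H Z :\ oth ei x :\ oth ej x.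
  apply/subsetP => b bN; rewrite !in_setD1.
  rewrite (subsetP (Nb_mono (subxx _) (subsetDl Z [set x])) b bN) andbT.
  by apply/andP; split; [apply: contraNneq yjZ' | apply: contraNneq yiZ'] => <-.
have c2 : #|Nb H Z :\ oth ei x :\ oth ej x| + 2 = #|Nb H Z|.
  have := cardsD1 (oth ei x) (Nb H Z); have := cardsD1 (oth ej x) (Nb H Z :\ oth ei x).
  rewrite (yinZ _ eiH ix) in_setD1 eq_sym yij (yinZ _ ejH jx) /=; slia.
have cZ : #|Z| = #|Z'| + 1 by have := cardsD1 x Z; rewrite xZ /Z' /=; slia.
have [Z0|nzZ'] := eqVneq Z' set0.
  have : oth ek x \in Nb H Z :\ oth ei x :\ oth ej x by rewrite !in_setD1 ykj yki yinZ.
  move=> yk; have : 0 < #|Nb H Z :\ oth ei x :\ oth ej x| by apply/card_gt0P; exists (oth ek x).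
  rewrite Z0 cards0 in cZ; slia.
have sZ'P : Z' \subset P by apply: subset_trans (subsetDl _ _) (subset_trans (subsetIl _ _) sXi).
have nZ'P : Z' != P by apply/eqP => e; move: xP; rewrite -e !inE eqxx.
have := hall_bound loopless mcH hcP sZ'P nzZ' nZ'P.
have := subset_leq_card sZ'; slia.
Qed.


Lemma partII (T : {set E}) :
  (forall e, e \in T -> inc e x /\ typeII u v [set: V] [set: E] e1 e2 e) -> #|T| <= 2.
Proof.
move=> hT; rewrite leqNgt; apply/negP => c3.
have [a aT] : exists a, a \in T by apply/set0Pn; rewrite -card_gt0; slia.
have : 1 < #|T :\ a| by have := cardsD1 a T; rewrite aT /=; slia.
case/card_gt1P => b [c [bT cT bc]].
move: bT cT; rewrite !in_setD1 => /andP[ba bT] /andP[ca cT].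
have data : forall e, e \in T -> [/\ e \in H, inc e x & exists X,
    [/\ x \in X, X \subset P, X != P, #|Nb (H :\ e) X| <= #|X| & oth e x \notin Nb (H :\ e) X]].
  move=> e eT; have [ie [eD _ nrH]] := hT e eT; have eH := inH eD; split => //; exact: defic.
have [aH ia [Xa [xa sa na la ya]]] := data a aT.
have [bH ib [Xb [xb sb nb lb yb]]] := data b bT.
have [cH ic [Xc [xc sc nc lc yc]]] := data c cT.
have [eQ heQ] := eQ_ex.
have ab : a != b by rewrite eq_sym.
have ac : a != c by rewrite eq_sym.
have cb : c != b by rewrite eq_sym.
have ba' : b != a by [].
have ca' : c != a by [].
have [Uab|Uab] := eqVneq (Xa :|: Xb) P; last first.
  exact: (case1 aH bH cH ia ib ic ab ac bc xa xb sa sb la lb ya yb Uab).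
have [Uac|Uac] := eqVneq (Xa :|: Xc) P; last first.
  exact: (case1 aH cH bH ia ic ib ac ab cb xa xc sa sc la lc ya yc Uac).
have [Ubc|Ubc] := eqVneq (Xb :|: Xc) P; last first.
  exact: (case1 bH cH aH ib ic ia bc ba' ca' xb xc sb sc lb lc yb yc Ubc).
have ma := Ymeets aH ia xa sa na la heQ.
have mb := Ymeets bH ib xb sb nb lb heQ.
have mc := Ymeets cH ic xc sc nc lc heQ.
have dab := fun q => Ydisj (q := q) aH bH ia ib ab xa xb Uab.
have dac := fun q => Ydisj (q := q) aH cH ia ic ac xa xc Uac.
have dbc := fun q => Ydisj (q := q) bH cH ib ic bc xb xc Ubc.
case/orP: ma => ha; case/orP: mb => hb; case/orP: mc => hc;
first [exact: dab _ ha hb | exact: dac _ ha hc | exact: dbc _ hb hc].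
Qed.

End Main.

Theorem mainTheorem7 (V E : finType) (u v : E -> V)
  (loopless : forall e, u e != v e)
  (e1 e2 : E)
  (Gnb : near_bipartite u v [set: V] [set: E])
  (Gbrick : brick u v [set: V] [set: E])
  (hdb : removable_doubleton u v [set: V] [set: E] e1 e2) :
  forall x : V,
    (forall T : {set E},
       (forall e, e \in T -> incident u v e x /\ typeI u v [set: V] [set: E] e1 e2 e) ->
       #|T| <= 1)
  /\
    (forall T : {set E},
       (forall e, e \in T -> incident u v e x /\ typeII u v [set: V] [set: E] e1 e2 e) ->
       #|T| <= 2).
Proof.
move=> x; have hdb' := hdb; case: hdb' => _ _ _ [A hA] _.
split.
- exact: (partI loopless Gnb Gbrick hdb hA).
- exact: (partII loopless Gnb Gbrick hdb hA).
Qed.
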